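(* Let $p$ be an odd prime and let $a,b_1,b_2,b_3,c$ be integers such that all factorials appearing on the right-hand side below are factorials of nonnegative integers less than $p$. Then in $\mathbb{F}_p$ $$\int_{[1;1;1]_p}t^a(1-t)^{b_1}(s-t)^{p-c}(1-s)^{b_2}(u-s)^{p-c}(1-u)^{b_3}\,dt\,ds\,du$$ $$=-\,\frac{a!\,(b_1+b_2+b_3-2c+2)!}{(a+b_1+b_2+b_3-2c+3-p)!}\cdot\frac{(p-c)!\,(b_2+b_3-c+1)!}{(b_2+b_3-2c+2)!}\cdot\frac{(p-c)!\,b_3!}{(b_3-c+1)!}.$$
   Context: For a polynomial $P(x_1,\dots,x_k)=\sum_d c_dx_1^{d_1}\cdots x_k^{d_k}$ with coefficients in $\mathbb{F}_p$ and $l\in\mathbb{Z}_{>0}^k$, the $\mathbb{F}_p$-integral $\int_{[l_1,\dots,l_k]_p}P\,dx$ is the coefficient $c_{l_1p-1,\dots,l_kp-1}$. Thus the left-hand side is the coefficient of $t^{p-1}s^{p-1}u^{p-1}$ in the integrand reduced mod $p$. Factorials are taken in $\mathbb{F}_p$. *)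

(* Defs.v *)
From HB Require Import structures.
From mathcomp Require Import all_boot all_order all_algebra.
From mathcomp Require Import mpoly.
Set Implicit Arguments. Unset Strict Implicit. Unset Printing Implicit Defensive.
Import GRing.Theory.
Local Open Scope ring_scope.

(* F_p-integral over [l_1,...,l_k]_p : the coefficient of
   x_1^(l_1 p - 1) ... x_k^(l_k p - 1) of P. *)
Definition Fp_integral (R : nzRingType) (p k : nat) (l : k.-tuple nat)
  (P : {mpoly R[k]}) : R :=
  P@_[multinom ((tnth l i) * p).-1 | i < k].

Definition integrand3 (p : nat) (a b1 b2 b3 c : nat) : {mpoly 'F_p[3]} :=
  let t : {mpoly 'F_p[3]} := 'X_(inord 0) in
  let s : {mpoly 'F_p[3]} := 'X_(inord 1) in
  let u : {mpoly 'F_p[3]} := 'X_(inord 2) in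
  t ^+ a * (1 - t) ^+ b1 * (s - t) ^+ (p - c) * (1 - s) ^+ b2
    * (u - s) ^+ (p - c) * (1 - u) ^+ b3.

(* Factorial of an integer argument (used only for arguments in [0, p)),
   taken in F_p. *)
Definition factZ (p : nat) (z : int) : 'F_p := ((`|z|%N)`!)%:R.

(* Main.v *)
Require Import Defs.
From HB Require Import structures.
From mathcomp Require Import all_boot all_order all_algebra.
From mathcomp Require Import mpoly zify ring.
Import GRing.Theory Num.Theory.
Local Open Scope ring_scope.

Definition trunc (p : nat) (R : nzRingType) (q : {poly R}) : {poly R} := \poly_(i < p) q`_i.
Arguments trunc p {R} q.

Section Gen.
Context {p : nat} {R : idomainType} (hp : prime p) (hR : p \in [pchar R]).



Lemma coef_cX (c : R) n j :
  ((c%:P - 'X) ^+ n)`_j = (-1) ^+ j * c ^+ (n - j) *+ 'C(n, j).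
Proof.
have E i : (-1) ^+ i * c%:P ^+ (n - i) = ((-1) ^+ i * c ^+ (n - i))%:P.
  by rewrite rmorphM rmorphXn rmorphN rmorph1 rmorphXn.
rewrite exprBn coef_sum.
have [ltj|gej] := ltnP j n.+1; last first.
  rewrite bin_small // mulr0n big1 // => i _.
  rewrite coefMn E coefCM coefXn.
  by rewrite (gtn_eqF (leq_trans (ltn_ord i) gej)) !mulr0 mul0rn.
rewrite (bigD1 (Ordinal ltj)) //= big1 ?addr0.
  by rewrite coefMn E coefCM coefXn eqxx mulr1.
move=> i /eqP hij; rewrite coefMn E coefCM coefXn.
case: eqP => [e|]; last by rewrite mulr0 mul0rn.
by case: hij; apply/val_inj; rewrite /= e.
Qed.

Lemma fact_neq0 {n} : (n < p)%N -> (n`!)%:R != 0 :> R.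
Proof.
move=> lt; rewrite -(dvdn_pcharf hR).
elim: n lt => [|n IH] lt.
  by rewrite fact0 dvdn1; apply/eqP => e; move: (prime_gt1 hp); rewrite e.
rewrite factS Euclid_dvdM // negb_or IH ?(ltnW lt) // andbT.
by rewrite gtnNdvd.
Qed.

Lemma binom_pm1 j : (j < p)%N -> (-1) ^+ j *+ 'C(p.-1, j) = 1 :> R.
Proof.
elim: j => [|j IH] lt; first by rewrite bin0 expr0.
have hpq : p = (p.-1).+1 by rewrite prednK // prime_gt0.
have hb := binS p.-1 j; rewrite -hpq in hb.
have e : 'C(p.-1, j.+1) = ('C(p, j.+1) - 'C(p.-1, j))%N by rewrite hb; lia.
have hd : ('C(p.-1, j) <= 'C(p, j.+1))%N by rewrite hb; lia.
rewrite e -mulr_natr natrB // mulrBr.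
have -> : ('C(p, j.+1))%:R = 0 :> R.
  by apply/eqP; rewrite -(dvdn_pcharf hR) prime_dvd_bin // lt.
rewrite mulr0 sub0r exprS.
rewrite mulN1r mulNr opprK mulr_natr IH //; exact: ltnW.
Qed.

Lemma int_deriv (q : {poly R}) : (q^`())`_p.-1 = 0.
Proof.
by rewrite coef_deriv prednK ?prime_gt0 // -mulr_natr (pcharf0 hR) mulr0.
Qed.

Lemma parts_d k (G H : {poly R}) :
  (G * H^`(k))`_p.-1 = (-1) ^+ k * (G^`(k) * H)`_p.-1.
Proof.
elim: k G => [|k IH] G; first by rewrite !derivn0 expr0 mul1r.
have step (G1 H1 : {poly R}) : (G1 * H1^`())`_p.-1 = - (G1^`() * H1)`_p.-1.
  apply/eqP; rewrite -subr_eq0 opprK -coefD addrC -derivM.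
  by rewrite int_deriv.
by rewrite derivnS step IH derivSn exprS mulN1r mulNr.
Qed.
Lemma natmul_inj (x y : {poly R}) m : m%:R != 0 :> R -> x *+ m = y *+ m -> x = y.
Proof.
move=> hm e.
have hm' : (m%:R : {poly R}) != 0.
  by rewrite -(rmorph_nat (@polyC R) m) polyC_eq0.
by apply: (mulIf hm'); rewrite !mulr_natr.
Qed.
Lemma natmulR_inj (x y : R) m : m%:R != 0 :> R -> x *+ m = y *+ m -> x = y.
Proof. by move=> hm; rewrite -(mulr_natr x) -(mulr_natr y) => /(mulIf hm). Qed.

Lemma parts k (G H : {poly R}) : (k < p)%N ->
  (G * H^`N(k))`_p.-1 = (-1) ^+ k * (G^`N(k) * H)`_p.-1.
Proof.
move=> lk.
have := parts_d k G H; rewrite !nderivn_def mulrnAr mulrnAl !coefMn mulrnAr.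
move=> e; exact: (natmulR_inj _ _ _ (fact_neq0 lk) e).
Qed.


Lemma trunc_int (f q : {poly R}) : (f * trunc p q)`_p.-1 = (f * q)`_p.-1.
Proof.
rewrite !coefM; apply: eq_bigr => i _; rewrite coef_poly.
by rewrite (leq_ltn_trans (leq_subr _ _)) // prednK ?prime_gt0.
Qed.
Lemma deriv_cX (c : R) n k :
  ((c%:P - 'X) ^+ n)^`(k) = ((-1) ^+ k *+ n ^_ k)%:P * (c%:P - 'X) ^+ (n - k).
Proof.
elim: k => [|k IH]; first by rewrite derivn0 expr0 ffactn0 mul1r subn0.
rewrite derivnS IH derivM derivC mul0r add0r deriv_exp derivB derivC derivX sub0r.
rewrite ffactnSr subnS !rmorphMn !rmorphXn /= rmorphN rmorph1.
by rewrite mulrnA exprS; ring.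
Qed.
Lemma nderiv_cX (c : R) n k : (k < p)%N ->
  ((c%:P - 'X) ^+ n)^`N(k) = ((-1) ^+ k *+ 'C(n, k))%:P * (c%:P - 'X) ^+ (n - k).
Proof.
move=> lk; apply: (natmul_inj _ _ _ (fact_neq0 lk)).
by rewrite -nderivn_def deriv_cX -bin_ffact -mulrnAl -rmorphMn mulrnA.
Qed.
End Gen.

Section L1.
Context {p : nat} {A : idomainType} (hp : prime p) (hA : p \in [pchar A]).

Let hB : p \in [pchar {poly A}].
Proof. by rewrite pchar_poly. Qed.

Lemma int_trunc (h : {poly A}) :
  ((map_poly polyC h) * (('X : {poly A})%:P - 'X) ^+ p.-1)`_p.-1 = trunc p h.
Proof.
have hpn : p = p.-1.+1 by rewrite prednK ?prime_gt0.
rewrite coefM /trunc poly_def [in RHS]hpn.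
apply: eq_bigr => i _.
have lti : (i < p)%N by rewrite [X in (_ < X)%N]hpn.
rewrite coef_cX -mulrnAl (binom_pm1 hp hB) ?mul1r; last by rewrite (leq_ltn_trans (leq_subr _ _)) // prednK ?prime_gt0.
rewrite subKn; last by rewrite -ltnS (ltn_ord i).
by rewrite coef_map /= mul_polyC.
Qed.
Lemma L1 (g : {poly A}) c : (0 < c <= p)%N ->
  ((map_poly polyC g) * (('X : {poly A})%:P - 'X) ^+ (p - c))`_p.-1
  = (-1) ^+ c.-1 * trunc p (g^`N(c.-1)).
Proof.
move=> /andP[c0 cp].
have lk : (c.-1 < p)%N by lia.
have hQ : (('X : {poly A})%:P - 'X) ^+ (p - c) = ((('X : {poly A})%:P - 'X) ^+ p.-1)^`N(c.-1).
  rewrite (nderiv_cX hp hB) // (binom_pm1 hp hB) // mul1r.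
  congr (_ ^+ _); lia.
by rewrite hQ (parts hp hB) // nderivn_map int_trunc.
Qed.
End L1.

Section Nest.
Variable F : fieldType.
Local Notation P2 := {poly F}.
Local Notation P1 := {poly P2}.
Local Notation P0 := {poly P1}.

Definition hv : 'I_3 -> P0 := fun i => nth 0 [:: 'X; ('X)%:P; (('X)%:P)%:P] i.
Definition Phi : {rmorphism {mpoly F[3]} -> P0} := mmap ((@polyC P1) \o (@polyC P2) \o (@polyC F)) hv.

Let i0 : 'I_3 := ord0.
Let i1 : 'I_3 := lift ord0 ord0.
Let i2 : 'I_3 := lift ord0 (lift ord0 ord0).

Lemma coefMnat (R : nzRingType) (x : {poly R}) (b : bool) k :
  (x * b%:R)`_k = x`_k * b%:R.
Proof. by rewrite !mulr_natr coefMn. Qed.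

Lemma mnm3_eq (m m' : 'X_{1..3}) :
  (m' == m) = [&& m' i0 == m i0, m' i1 == m i1 & m' i2 == m i2].
Proof.
apply/eqP/and3P => [-> //|[/eqP e0 /eqP e1 /eqP e2]].
apply/mnmP => -[[|[|[|i]]] hi] //.
- by have -> : Ordinal hi = i0 by apply: val_inj.
- by have -> : Ordinal hi = i1 by apply: val_inj.
- by have -> : Ordinal hi = i2 by apply: val_inj.
Qed.

Lemma Phi_coef (P : {mpoly F[3]}) (m : 'X_{1..3}) :
  P@_m = (((Phi P)`_(m i0))`_(m i1))`_(m i2).
Proof.
elim/mpolyind: P => [|c m' P _ _ IH].
  by rewrite mcoeff0 rmorph0 !coef0.
rewrite mcoeffD mcoeffZ mcoeffX IH rmorphD !coefD; congr (_ + _).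
rewrite /Phi /= mmapZ mmapX.
rewrite /mmap1 !big_ord_recl big_ord0 mulr1 /= /=.
have -> : hv ord0 = 'X by [].
have -> : hv (lift ord0 ord0) = ('X)%:P by [].
have -> : hv (lift ord0 (lift ord0 ord0)) = (('X)%:P)%:P by [].
rewrite -!(rmorphXn (@polyC P1)) -(rmorphXn (@polyC P2)).
rewrite -(rmorphM (@polyC P1)) [('X^_ * _)]mulrC mulrA -(rmorphM (@polyC P1)).
rewrite coefCM coefXn coefMnat mulrCA -(rmorphM (@polyC P2)) [('X^_ * _)]mulrC coefCM coefXn.
rewrite !coefMnat coefCM coefXn mnm3_eq /i0 /i1 /i2 !(eq_sym (m' _)).
rewrite -!mulnb !natrM; ring.
Qed.

Lemma PhiX (i : 'I_3) : Phi 'X_i = hv i.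
Proof. by rewrite /Phi /= mmapX mmap1U. Qed.
End Nest.
Arguments Phi {F}.
Arguments hv {F}.

Section Main.
Variables (p : nat) (a b1 b2 b3 c : nat).
Hypothesis hp : prime p.
Local Notation F := 'F_p.
Local Notation P2 := {poly F}.
Local Notation P1 := {poly P2}.
Local Notation P0 := {poly P1}.

Let t : P0 := 'X.
Let s : P0 := ('X : P1)%:P.
Let u : P0 := (('X : P2)%:P : P1)%:P.

Definition g1 : P1 := 'X^a * (1%:P - 'X) ^+ b1.
Definition K1 : P1 := (1%:P - 'X) ^+ b2 * (('X : P2)%:P - 'X) ^+ (p - c) * (1%:P - ('X : P2)%:P) ^+ b3.

Lemma step0 : Phi (integrand3 p a b1 b2 b3 c) = map_poly polyC g1 * (s - t) ^+ (p - c) * K1%:P.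
Proof.
rewrite /integrand3 !rmorphM !rmorphXn !rmorphB !rmorph1.
rewrite !PhiX /hv !inordK //= /g1 /K1.
rewrite map_polyX /t /s /u.
ring.
Qed.

Lemma trunc_map (R S : nzRingType) (f : {rmorphism R -> S}) (q : {poly R}) :
  trunc p (map_poly f q) = map_poly f (trunc p q).
Proof.
apply/polyP => i; rewrite coef_map /= !coef_poly.
case: ifP => _; last by rewrite rmorph0.
by case: ifP => // h; rewrite nth_default ?rmorph0 // leqNgt h.
Qed.

Definition g2 : P2 := 'X^a * (1%:P - 'X) ^+ b1.
Definition T2 : P2 := trunc p (g2^`N(c.-1)).

Hypothesis hc : (0 < c <= p)%N.
Let hF : p \in [pchar F] := pchar_Fp hp.
Let hP2 : p \in [pchar P2]. Proof. by rewrite pchar_poly. Qed.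
Let hP1 : p \in [pchar P1]. Proof. by rewrite pchar_poly. Qed.

Lemma step1 : (Phi (integrand3 p a b1 b2 b3 c))`_p.-1 = (-1) ^+ c.-1 * map_poly polyC T2 * K1.
Proof.
rewrite step0 coefMC /s /t (L1 hp hP2) //.
have -> : g1 = map_poly polyC g2.
  by rewrite /g1 /g2 rmorphM !rmorphXn rmorphB /= map_polyX map_polyC /=.
by rewrite nderivn_map trunc_map.
Qed.

Definition g3 : P2 := (1%:P - 'X) ^+ b2 * T2.

Lemma step2 : ((-1) ^+ c.-1 * map_poly polyC T2 * K1 : P1)`_p.-1
  = (-1) ^+ c.-1 * trunc p (g3^`N(c.-1)) * ((-1) ^+ c.-1 * (1%:P - 'X) ^+ b3).
Proof.
have -> : (-1) ^+ c.-1 * map_poly polyC T2 * K1 = map_poly polyC g3 *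
   (('X : P2)%:P - 'X) ^+ (p - c) * (((-1) ^+ c.-1 * (1%:P - 'X) ^+ b3 : P2))%:P.
  rewrite /K1 /g3 !(rmorphM, rmorphXn, rmorphB, rmorphN, rmorph1) /=.
  rewrite !map_polyX.
  ring.
by rewrite coefMC (L1 hp hF).
Qed.

Hypothesis ha : (a < p)%N.

Lemma step3 : ((-1) ^+ c.-1 * trunc p (g3^`N(c.-1)) * ((-1) ^+ c.-1 * (1%:P - 'X) ^+ b3) : P2)`_p.-1
  = ('C(b3, c.-1) * 'C(b2 + (b3 - c.-1), c.-1))%:R * (-1) ^+ (p.-1 - a)
     *+ 'C(b1 + (b2 + (b3 - c.-1) - c.-1), p.-1 - a).
Proof.
set k := c.-1.
have lk : (k < p)%N by rewrite /k; lia.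
have sq : (-1) ^+ k * (-1) ^+ k = 1 :> P2 by rewrite -exprMn mulrNN mulr1 expr1n.
have sqF : (-1) ^+ k * (-1) ^+ k = 1 :> F by rewrite -exprMn mulrNN mulr1 expr1n.
have -> : (-1) ^+ k * trunc p (g3^`N(k)) * ((-1) ^+ k * (1%:P - 'X) ^+ b3)
   = (1%:P - 'X) ^+ b3 * trunc p (g3^`N(k)) * ((-1) ^+ k * (-1) ^+ k) by ring.
rewrite sq mulr1 (trunc_int hp) (parts hp hF) // (nderiv_cX hp hF) //.
have -> : ((-1) ^+ k *+ 'C(b3, k))%:P * (1%:P - 'X) ^+ (b3 - k) * g3
   = ((-1) ^+ k *+ 'C(b3, k))%:P * ((1%:P - 'X) ^+ (b2 + (b3 - k)) * T2).
  by rewrite /g3 exprD; ring.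
rewrite coefCM /T2 (trunc_int hp) (parts hp hF) // (nderiv_cX hp hF) //.
have -> : ((-1) ^+ k *+ 'C(b2 + (b3 - k), k))%:P * (1%:P - 'X) ^+ (b2 + (b3 - k) - k) * g2
   = ((-1) ^+ k *+ 'C(b2 + (b3 - k), k))%:P * ('X^a * (1%:P - 'X) ^+ (b1 + (b2 + (b3 - k) - k))).
  by rewrite /g2 exprD; ring.
rewrite coefCM coefXnM ltnNge (_ : (a <= p.-1)%N) /=; last by lia.
rewrite coef_cX expr1n mulr1 -/k.
set X := RHS.
transitivity (((-1) ^+ k * (-1) ^+ k) * ((-1) ^+ k * (-1) ^+ k) * X :> F).
  by rewrite /X natrM; ring.
by rewrite sqF !mul1r.
Qed.
End Main.

Lemma alg (K : fieldType) (fb3 fk fb3k fB' fB'k fj fB fBj e s: K) :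
  fk != 0 -> fb3k != 0 -> fB'k != 0 -> fj != 0 -> fBj != 0 -> s * s = 1 ->
  fb3 / (fk * fb3k) * (fB' / (fk * fB'k)) * e * (fB / (fj * fBj))
  = - (- e / fj * fB / fBj) * (s / fk * fB' / fB'k) * (s / fk * fb3 / fb3k).
Proof.
move=> h1 h2 h3 h4 h5 ss.
transitivity ((s * s) * (fb3 / (fk * fb3k) * (fB' / (fk * fB'k)) * e * (fB / (fj * fBj)))).
  by rewrite ss mul1r.
field.
by rewrite h1 h2 h3 h4 h5.
Qed.

Section Ar.
Variable p : nat.
Hypothesis hp : prime p.
Local Notation F := 'F_p.

Lemma factF_neq0 n : (n < p)%N -> (n`!)%:R != 0 :> F.
Proof.
move=> lt; rewrite -(dvdn_pcharf (pchar_Fp hp)).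
elim: n lt => [|n IH] lt.
  by rewrite fact0 dvdn1; apply/eqP => e; move: (prime_gt1 hp); rewrite e.
rewrite factS Euclid_dvdM // negb_or IH ?(ltnW lt) // andbT.
by rewrite gtnNdvd.
Qed.

Lemma wilsonF : ((p.-1)`!)%:R = -1 :> F.
Proof.
have := Wilson (prime_gt1 hp); rewrite hp => /esym.
rewrite (dvdn_pcharf (pchar_Fp hp)) -natr1 => /eqP e.
by rewrite -[LHS]subr0 -e opprD addrA subrr sub0r.
Qed.

Lemma W m : (m < p)%N -> (m`!)%:R * ((p.-1 - m)`!)%:R = (-1) ^+ m.+1 :> F.
Proof.
elim: m => [|m IH] lt; first by rewrite fact0 mul1r subn0 wilsonF expr1.
have e : (p.-1 - m)`! = ((p.-1 - m.+1).+1 * (p.-1 - m.+1)`!)%N.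
  by rewrite -factS; congr (_`!); lia.
have e2 : ((p.-1 - m.+1).+1)%:R = - (m.+1)%:R :> F.
  apply/eqP; rewrite -subr_eq0 opprK -natrD.
  by rewrite -(dvdn_pcharf (pchar_Fp hp)) (_ : _ + _ = p)%N ?dvdnn //; lia.
move: (IH (ltnW lt)); rewrite e natrM e2 => E.
rewrite exprS -E factS natrM; ring.
Qed.

Lemma binF n m : (n < p)%N -> (m <= n)%N ->
  ('C(n, m))%:R = (n`!)%:R / ((m`!)%:R * ((n - m)`!)%:R) :> F.
Proof.
move=> ln lm; rewrite -(bin_fact lm) !natrM mulfK //.
by rewrite mulf_neq0 // factF_neq0 //; lia.
Qed.

Lemma final_arith (a k b3 B' B : nat) : odd p -> (a < p)%N -> (B < p)%N -> (k < p)%N ->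
  (b3 < p)%N -> (B' < p)%N -> (k <= b3)%N -> (k <= B')%N -> (p.-1 - a <= B)%N ->
  (('C(b3, k) * 'C(B', k))%:R * (-1) ^+ (p.-1 - a) *+ 'C(B, p.-1 - a) : F)
  = - ((a`!)%:R * (B`!)%:R / ((B - (p.-1 - a))`!)%:R)
    * (((p.-1 - k)`!)%:R * (B'`!)%:R / ((B' - k)`!)%:R)
    * (((p.-1 - k)`!)%:R * (b3`!)%:R / ((b3 - k)`!)%:R).
Proof.
move=> op la lB lk lb3 lB' kb3 kB' jB.
have lj : (p.-1 - a < p)%N by lia.
have n1 : (b3 - k < p)%N by lia.
have n2 : (B' - k < p)%N by lia.
have n3 : (B - (p.-1 - a) < p)%N by lia.
have f1 := factF_neq0 _ n1; have f2 := factF_neq0 _ n2; have f3 := factF_neq0 _ n3.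
have f4 := factF_neq0 _ lj; have f5 := factF_neq0 _ lk.
have Wa := W _ la; have Wj := W _ lj; have Wk := W _ lk.
rewrite (_ : p.-1 - (p.-1 - a) = a)%N in Wj; last by lia.
rewrite -mulr_natr natrM (binF _ _ lb3 kb3) (binF _ _ lB' kB') (binF _ _ lB jB).
have ha : (a`!)%:R = (-1) ^+ a.+1 / ((p.-1 - a)`!)%:R :> F.
  by rewrite -Wa mulfK // factF_neq0.
have hk : ((p.-1 - k)`!)%:R = (-1) ^+ k.+1 / (k`!)%:R :> F.
  by rewrite -Wk mulrC mulKf // factF_neq0.
have hs : (-1) ^+ a.+1 = - (-1) ^+ (p.-1 - a) :> F.
  have lap : (a <= p.-1)%N by rewrite -ltnS prednK ?prime_gt0.
  have e : (a.+1 + (p.-1 - a))%N = p by rewrite addSn subnKC // prednK ?prime_gt0.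
  have o : odd (a.+1 + (p.-1 - a)) by rewrite e.
  move: o; rewrite oddD -(signr_odd _ a.+1) -(signr_odd _ (p.-1 - a)).
  by case: (odd a.+1); case: (odd (p.-1 - a)); rewrite /= ?expr0 ?expr1 ?opprK.
rewrite ha hk hs.
apply: alg => //.
by rewrite -exprMn mulrNN mulr1 expr1n.
Qed.
End Ar.

Theorem theorem3p8 (p : nat) (a b1 b2 b3 c : nat) :
  prime p -> odd p -> (c <= p)%N ->
  let args : seq int :=
    [:: a%:Z; (b1 + b2 + b3)%:Z - 2 * c%:Z + 2;
        (a + b1 + b2 + b3)%:Z - 2 * c%:Z + 3 - p%:Z;
        p%:Z - c%:Z; (b2 + b3)%:Z - c%:Z + 1;
        (b2 + b3)%:Z - 2 * c%:Z + 2;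
        b3%:Z; b3%:Z - c%:Z + 1] in
  all (fun z => (0 <= z) && (z < p%:Z)) args ->
  Fp_integral p [tuple 1%N; 1%N; 1%N] (integrand3 p a b1 b2 b3 c)
  = - (factZ p a%:Z * factZ p ((b1 + b2 + b3)%:Z - 2 * c%:Z + 2)
         / factZ p ((a + b1 + b2 + b3)%:Z - 2 * c%:Z + 3 - p%:Z))
    * (factZ p (p%:Z - c%:Z) * factZ p ((b2 + b3)%:Z - c%:Z + 1)
         / factZ p ((b2 + b3)%:Z - 2 * c%:Z + 2))
    * (factZ p (p%:Z - c%:Z) * factZ p b3%:Z
         / factZ p (b3%:Z - c%:Z + 1)).
Proof.
move=> hp op hcp args H.
rewrite /args /= in H.
case/andP: H => l1 H.
case/andP: H => /andP[z2 l2] H.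
case/andP: H => /andP[z3 l3] H.
case/andP: H => /andP[z4 l4] H.
case/andP: H => /andP[z5 l5] H.
case/andP: H => /andP[z6 l6] H.
case/andP: H => l7 H.
case/andP: H => /andP[z8 l8] _.
have c0 : (0 < c)%N by lia.
have hc : (0 < c <= p)%N by rewrite c0 hcp.
have ha : (a < p)%N by lia.
have hm : Fp_integral p [tuple 1%N; 1%N; 1%N] (integrand3 p a b1 b2 b3 c)
   = (((Phi (integrand3 p a b1 b2 b3 c))`_p.-1)`_p.-1)`_p.-1.
  by rewrite /Fp_integral Phi_coef !mnmE /= mul1n.
rewrite hm step1 // step2 // step3 //.
have absz_eq (z : int) (n : nat) : z = n%:Z -> `|z|%N = n by move->.
have e1 : absz ((a%:Z)%R) = a by [].
have e2 : absz (((b1 + b2 + b3)%:Z - 2 * c%:Z + 2)%R) = (b1 + (b2 + (b3 - c.-1) - c.-1))%N.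
  by apply: absz_eq; lia.
have e3 : absz (((a + b1 + b2 + b3)%:Z - 2 * c%:Z + 3 - p%:Z)%R)
   = ((b1 + (b2 + (b3 - c.-1) - c.-1)) - (p.-1 - a))%N.
  by apply: absz_eq; lia.
have e4 : absz ((p%:Z - c%:Z)%R) = (p.-1 - c.-1)%N by apply: absz_eq; lia.
have e5 : absz (((b2 + b3)%:Z - c%:Z + 1)%R) = (b2 + (b3 - c.-1))%N by apply: absz_eq; lia.
have e6 : absz (((b2 + b3)%:Z - 2 * c%:Z + 2)%R) = (b2 + (b3 - c.-1) - c.-1)%N by apply: absz_eq; lia.
have e7 : absz ((b3%:Z)%R) = b3 by [].
have e8 : absz ((b3%:Z - c%:Z + 1)%R) = (b3 - c.-1)%N by apply: absz_eq; lia.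
rewrite /factZ e1 e2 e3 e4 e5 e6 e7 e8.
apply: final_arith => //; lia.
Qed.
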